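(* Let $A\in\mathcal{PM}(n)$ be a poset matrix with row vectors $r_0,\ldots,r_{n-1}$. Then the Boolean row space $\mathsf{Row}_{\mathbb B}(A)=\{\sum_{i\in S} r_i : S\subseteq X_n\}$ (Boolean sums, the empty sum being $\mathbf 0$) equals the set $\mathsf{PV}_n(A)$ of poset vectors of $A$.
   Context: Let $X_n=\{0,1,\ldots,n-1\}$. A naturally labeled (NL) poset on $X_n$ is a partial order $\preceq$ on $X_n$ such that $x\preceq y$ implies $x\le y$ in the usual integer order. Its poset matrix is the $n\times n$ $(0,1)$-matrix $A=(a_{i,j})_{i,j\in X_n}$ with $a_{i,j}=1$ if $j\preceq i$ and $0$ otherwise; $\mathcal{PM}(n)$ is the set of all such matrices. Arithmetic is in the Boolean algebra $\{0,1\}$ ($1+1=1$). For $v\in\{0,1\}^n$ (a row vector), $A^v=\begin{bmatrix}A&\mathbf{0}\\ v&1\end{bmatrix}$, and $v$ is a poset vector of $A$ if $A^v\in\mathcal{PM}(n+1)$; $\mathsf{PV}_n(A)$ is the set of poset vectors of $A$. *)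

(* Defs.v *)
From mathcomp Require Import all_boot all_order all_algebra.
Set Implicit Arguments. Unset Strict Implicit. Unset Printing Implicit Defensive.

(* Boolean (0,1)-matrices are represented as 'M[bool]_n; entry true = 1.
   Index i : 'I_n stands for element i of X_n = {0,...,n-1}. *)

(* a_{i,j} = 1 iff j ⪯ i.  A is a poset matrix iff the relation
   j ⪯ i :<-> A i j is a partial order which is naturally labeled. *)
Definition is_poset_matrix (n : nat) (A : 'M[bool]_n) : bool :=
  [&& [forall i, A i i],
      [forall i, forall j, (A i j && A j i) ==> (i == j)],
      [forall i, forall j, forall k, (A i j && A j k) ==> A i k]
    & [forall i, forall j, A i j ==> (j <= i)%N]].

Definition ext_mx (n : nat) (A : 'M[bool]_n) (v : 'rV[bool]_n) : 'M[bool]_(n + 1) :=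
  block_mx A (const_mx false) v (const_mx true).

Definition poset_vector (n : nat) (A : 'M[bool]_n) (v : 'rV[bool]_n) : bool :=
  is_poset_matrix (ext_mx A v).

Definition bool_row_sum (n : nat) (A : 'M[bool]_n) (S : {set 'I_n}) : 'rV[bool]_n :=
  \row_j [exists i in S, A i j].

Definition in_bool_row_space (n : nat) (A : 'M[bool]_n) (v : 'rV[bool]_n) : Prop :=
  exists S : {set 'I_n}, v = bool_row_sum A S.

(* Main.v *)
Require Import Defs.
From mathcomp Require Import all_boot all_order all_algebra.

Lemma ord1_0 (i : 'I_1) : i = ord0.
Proof. by apply: val_inj; case: i => [[]]. Qed.

Lemma pv_iff (n : nat) (A : 'M[bool]_n) (v : 'rV[bool]_n) :
  is_poset_matrix A ->
  poset_vector A v <-> (forall j k, v ord0 j -> A j k -> v ord0 k).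
Proof.
move=> /and4P[/forallP Hr /forallP Ha /forallP Ht /forallP Hn].
rewrite /poset_vector /is_poset_matrix /ext_mx; split.
  case/and4P=> _ _ /forallP Ht' _ j k vj Ajk.
  move: (Ht' (rshift n (ord0 : 'I_1))) => /forallP/(_ (lshift 1 j)).
  move=> /forallP/(_ (lshift 1 k)).
  by rewrite block_mxEdl !block_mxEul block_mxEdl vj Ajk.
move=> Hv; apply/and4P; split.
- apply/forallP => i; case: (split_ordP i) => i' ->.
    by rewrite block_mxEul.
  by rewrite block_mxEdr mxE.
- apply/forallP => i; apply/forallP => j.
  case: (split_ordP i) => i' ->; case: (split_ordP j) => j' ->;
    rewrite ?block_mxEul ?block_mxEur ?block_mxEdl ?block_mxEdr ?mxE ?andbF //=.
  + apply/implyP => Hij; apply/eqP; apply: val_inj => /=.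
    by have /forallP/(_ j')/implyP/(_ Hij)/eqP -> := Ha i'.
  + by rewrite (ord1_0 i') (ord1_0 j').
- apply/forallP => i; apply/forallP => j; apply/forallP => k.
  case: (split_ordP i) => i' ->; case: (split_ordP j) => j' ->; case: (split_ordP k) => k' ->;
    rewrite ?block_mxEul ?block_mxEur ?block_mxEdl ?block_mxEdr ?mxE ?andbF //=.
  + exact: (forallP (forallP (Ht i') j') k').
  + by rewrite (ord1_0 i'); apply/implyP => /andP[]; apply: Hv.
  + by rewrite (ord1_0 i') (ord1_0 j'); apply/implyP.
- apply/forallP => i; apply/forallP => j.
  case: (split_ordP i) => i' ->; case: (split_ordP j) => j' ->;
    rewrite ?block_mxEul ?block_mxEur ?block_mxEdl ?block_mxEdr ?mxE //=.
  + exact: (forallP (Hn i') j').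
  + by apply/implyP => _; apply: leq_trans (ltnW (ltn_ord j')) (leq_addr _ _).
  + by rewrite (ord1_0 j') (ord1_0 i').
Qed.

Theorem theorem2p4 (n : nat) (A : 'M[bool]_n) :
  is_poset_matrix A ->
  forall v : 'rV[bool]_n, in_bool_row_space A v <-> poset_vector A v.
Proof.
move=> HA v; apply: (iff_trans _ (iff_sym (@pv_iff _ _ v HA))).
have /and4P[/forallP Hr _ /forallP Ht _] := HA.
split.
  case=> S -> j k; rewrite !mxE => /existsP[i /andP[iS Aij]] Ajk.
  apply/existsP; exists i; rewrite iS /=.
  by have /forallP/(_ k)/implyP := forallP (Ht i) j; apply; rewrite Aij Ajk.
move=> Hv; exists [set i | v ord0 i]; apply/rowP => k; rewrite !mxE.
apply/idP/existsP.
  by move=> vk; exists k; rewrite inE vk Hr.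
by case=> i /andP[]; rewrite inE; apply: Hv.
Qed.
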